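(* Let $x \in \mathbb{R}^n$ be a deterministic clean signal, $y \in \mathbb{R}^n$ a deterministic vector of noisy data, and $f:\mathbb{R}^n \to \mathbb{R}^n$ a denoiser. Let $\tilde a, \tilde b, \tilde c$ be random vectors in $\mathbb{R}^n$ (the noisy references) such that (1) all entries of $\tilde a, \tilde b, \tilde c$ (i.e. the $3n$ random variables $\tilde a_i, \tilde b_i, \tilde c_i$, $1\le i\le n$) are mutually independent; (2) $\mathbb{E}[\tilde a_i] = \mathbb{E}[\tilde b_i] = \mathbb{E}[\tilde c_i] = x_i$ for $1 \le i \le n$; and, for each $i$, $\tilde a_i, \tilde b_i, \tilde c_i$ have the same finite variance. Define $$\mathrm{MSE} := \frac{1}{n}\sum_{i=1}^n (x_i - f(y)_i)^2, \qquad \widetilde{\mathrm{uMSE}} := \frac{1}{n}\sum_{i=1}^n \left[(\tilde a_i - f(y)_i)^2 - \frac{(\tilde b_i - \tilde c_i)^2}{2}\right].$$ Then $\mathbb{E}[\widetilde{\mathrm{uMSE}}] = \mathrm{MSE}$.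
   Context: The clean signal $x$, the data $y$ and hence the denoised estimate $f(y)$ are deterministic; only the references $\tilde a,\tilde b,\tilde c$ are random. *)

(* Defs.v *)
From HB Require Import structures.
From mathcomp Require Import all_boot all_order all_algebra.
From mathcomp Require Import all_classical all_reals all_analysis.
Set Implicit Arguments. Unset Strict Implicit. Unset Printing Implicit Defensive.
Import Order.TTheory GRing.Theory Num.Theory.
Local Open Scope classical_set_scope.
Local Open Scope ring_scope.

Definition mutually_independent d (T : measurableType d) (R : realType)
  (P : probability T R) (I : finType) (X : I -> {RV P >-> R}) : Prop :=
  forall (J : {set I}) (B : I -> set R), (forall i, measurable (B i)) ->
    P (\bigcap_(i in [set i | i \in J]) (X i @^-1` B i)) =
    (\prod_(i in J) P (X i @^-1` B i))%E.

Definition refs_family d (T : measurableType d) (R : realType)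
  (P : probability T R) (n : nat) (a b c : 'I_n -> {RV P >-> R}) :
  ('I_n + 'I_n + 'I_n)%type -> {RV P >-> R} :=
  fun s => match s with
           | inl (inl i) => a i
           | inl (inr i) => b i
           | inr i => c i
           end.

Definition MSE (R : realType) (n : nat) (x fy : 'I_n -> R) : R :=
  n%:R^-1 * \sum_(i < n) (x i - fy i) ^+ 2.

Definition uMSE_tilde d (T : measurableType d) (R : realType) (n : nat)
  (a b c : 'I_n -> T -> R) (fy : 'I_n -> R) : T -> R :=
  fun w => n%:R^-1 *
    \sum_(i < n) ((a i w - fy i) ^+ 2 - (b i w - c i w) ^+ 2 / 2).

(* Main.v *)
Require Import Defs.
From HB Require Import structures.
From mathcomp Require Import all_boot all_order all_algebra.
From mathcomp Require Import all_classical all_reals all_analysis.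
From mathcomp Require Import measurable_realfun.
From mathcomp Require Import ring.
Import Order.TTheory GRing.Theory Num.Theory.
Local Open Scope classical_set_scope.
Local Open Scope ring_scope.

Definition pairRV d (T : measurableType d) (R : realType) (X Y : {mfun T >-> R}) :=
  fun w => (X w, Y w).

Arguments pairRV {d T R}.
Section pairRV.
Context d (T : measurableType d) (R : realType) (X Y : {mfun T >-> R}).
Lemma pairRV_mfun : measurable_fun setT (pairRV X Y).
Proof. exact: measurable_fun_pair. Qed.
HB.instance Definition _ := isMeasurableFun.Build _ _ _ _ (pairRV X Y) pairRV_mfun.
End pairRV.

Section indep.
Local Open Scope ereal_scope.
Context d (T : measurableType d) (R : realType) (P : probability T R).

Lemma indep_mul (X Y : {RV P >-> R}) :
  (forall A B, measurable A -> measurable B ->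
     P (X @^-1` A `&` Y @^-1` B) = P (X @^-1` A) * P (Y @^-1` B)) ->
  (X : T -> R) \in Lfun P 2%:E -> (Y : T -> R) \in Lfun P 2%:E ->
  'E_P[(X : T -> R) * Y] = 'E_P[X] * 'E_P[Y].
Proof.
move=> hXY X2 Y2.
have X1 : (X : T -> R) \in Lfun P 1 by rewrite Lfun_subset12 ?fin_num_measure.
have Y1 : (Y : T -> R) \in Lfun P 1 by rewrite Lfun_subset12 ?fin_num_measure.
have XY1 := Lfun2_mul_Lfun1 X2 Y2.
have iX := (Lfun1_integrable _ _).1 X1.
have iY := (Lfun1_integrable _ _).1 Y1.
have iXY := (Lfun1_integrable _ _).1 XY1.
pose mu := distribution P X; pose nu := distribution P Y.
pose pi := distribution P (pairRV X Y : {mfun T >-> _}).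
have piE : forall Z, measurable Z -> (mu \x nu) Z = pi Z.
  apply: product_measure_unique => A B mA mB.
  by rewrite /pi /mu /nu /distribution /pushforward -hXY.
pose g : R * R -> \bar R := fun z => (z.1 * z.2)%:E.
have mg : measurable_fun setT g.
  apply/measurable_EFinP; apply: measurable_funM => //.
have gXY : g \o (pairRV X Y) = EFin \o ((X : T -> R) \* Y)%R by [].
have ig : (mu \x nu).-integrable setT g.
  apply/integrableP; split => //.
  rewrite (eq_measure_integral pi); last by move=> A mA _; apply: piE.
  rewrite ge0_integral_distribution //=.
    by move/integrableP : iXY => [].
  apply/measurable_EFinP; apply: measurableT_comp => //; exact: measurable_funM.
transitivity (\int[pi]_z g z).
  by rewrite unlock integral_distribution.
rewrite (eq_measure_integral (mu \x nu)); last by move=> A mA _; apply/esym/piE.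
rewrite -integral12_prod_meas1 //.
have EY : 'E_P[Y] = \int[nu]_y (y%:E).
  by rewrite unlock (integral_distribution (f := EFin)) //; exact: measurable_EFinP.
have EX : 'E_P[X] = \int[mu]_y (y%:E).
  by rewrite unlock (integral_distribution (f := EFin)) //; exact: measurable_EFinP.
have inu : nu.-integrable setT EFin.
  apply/integrableP; split; first exact: EFin_measurable.
  rewrite ge0_integral_distribution //=.
    by move/integrableP : iY => [].
  by apply/measurable_EFinP; apply: measurableT_comp => //; exact: normr_measurable.
rewrite /fubini_F.
transitivity (\int[mu]_x (x%:E * 'E_P[Y])).
  apply: eq_integral => x _; rewrite /g /= EY -integralZl //.
have imu : mu.-integrable setT EFin.
  apply/integrableP; split; first exact: EFin_measurable.
  rewrite ge0_integral_distribution //=.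
    by move/integrableP : iX => [].
  by apply/measurable_EFinP; apply: measurableT_comp => //; exact: normr_measurable.
by rewrite -(fineK (expectation_fin_num Y1)) integralZr // -EX.
Qed.


Lemma LfunB2 (f g : T -> R) : f \in Lfun P 2%:E -> g \in Lfun P 2%:E ->
  (f \- g)%R \in Lfun P 2%:E.
Proof.
move=> hf hg.
have : (f - g)%R \in Lfun P 2%:E.
  rewrite rpredB //; (try exact: lee1n); by move=> ?.
by [].
Qed.

Lemma sq_expect (Z : T -> R) : Z \in Lfun P 2%:E ->
  'E_P[Z ^+ 2] = 'V_P[Z] + 'E_P[Z] ^+ 2.
Proof.
move=> Z2; have Z1 : Z \in Lfun P 1 by rewrite Lfun_subset12 ?fin_num_measure.
have Z21 : (Z ^+ 2)%R \in Lfun P 1 by exact: Lfun2_mul_Lfun1.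
rewrite varianceE // subeK //.
by rewrite fin_numX // expectation_fin_num.
Qed.

Lemma term_expect (A B C : T -> R) (k xi : R) :
  A \in Lfun P 2%:E -> B \in Lfun P 2%:E -> C \in Lfun P 2%:E ->
  'E_P[A] = xi%:E -> 'E_P[B] = xi%:E -> 'E_P[C] = xi%:E ->
  'V_P[A] = 'V_P[B] -> 'V_P[B] = 'V_P[C] ->
  'E_P[(B * C)%R] = 'E_P[B] * 'E_P[C] ->
  'E_P[fun w => (A w - k) ^+ 2 - (B w - C w) ^+ 2 / 2]%R = ((xi - k) ^+ 2)%:E.
Proof.
move=> A2 B2 C2 EA EB EC VAB VBC EBC.
have Pfin : P setT \is a fin_num := fin_num_measure P _ measurableT.
pose U := (A \- cst k)%R; pose W := (B \- C)%R.
have U2 : U \in Lfun P 2%:E by apply: LfunB2 => //; exact: Lfun_cst.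
have W2 : W \in Lfun P 2%:E by apply: LfunB2.
have U1 := Lfun_subset12 Pfin U2.
have W1 := Lfun_subset12 Pfin W2.
have UU1 : (U ^+ 2)%R \in Lfun P 1 by exact: Lfun2_mul_Lfun1.
have WW1 : (W ^+ 2)%R \in Lfun P 1 by exact: Lfun2_mul_Lfun1.
have -> : (fun w => (A w - k) ^+ 2 - (B w - C w) ^+ 2 / 2)%R =
    (U ^+ 2 \- (2^-1 : R) \o* W ^+ 2)%R.
  by apply/funext => w /=; rewrite /U /W /= mulrC.
rewrite expectationB ?Lfun_scale // expectationZl //.
rewrite !sq_expect //.
have EU : 'E_P[U] = (xi - k)%:E.
  rewrite expectationB ?Lfun_cst ?(Lfun_subset12 Pfin) // EA expectation_cst //.
have EW : 'E_P[W] = 0.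
  rewrite expectationB ?(Lfun_subset12 Pfin) // EB EC subee //.
have VU : 'V_P[U] = 'V_P[A] by exact: varianceB_cst_r.
have BC1 : (B * C)%R \in Lfun P 1 by exact: Lfun2_mul_Lfun1.
have cov0 : covariance P B C = 0.
  rewrite covarianceE //; try exact: (Lfun_subset12 Pfin).
  transitivity ('E_P[B] * 'E_P[C] - 'E_P[B] * 'E_P[C]).
    by congr (_ - _); exact: EBC.
  by rewrite EB EC subee.
have VW : 'V_P[W] = 'V_P[A] + 'V_P[A].
  by rewrite varianceB // cov0 mule0 sube0 VAB VBC.
rewrite EU EW VU VW.
have Vfin := variance_fin_num A2.
rewrite -(fineK Vfin).
rewrite !expe2 mule0 adde0. do 3! rewrite -?EFinD -?EFinM -?EFinB.
congr (_%:E).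
by field.
Qed.

Lemma expect_sum (n : nat) (F : 'I_n -> T -> R) :
  (forall i, F i \in Lfun P 1) ->
  'E_P[fun w => (\sum_(i < n) F i w)%R] = \sum_(i < n) 'E_P[F i].
Proof.
move=> F1.
have -> : (fun w => \sum_(i < n) F i w)%R = (\sum_(Xi <- map F (index_enum 'I_n)) Xi)%R.
  apply/funext => w; rewrite big_map fct_sumE //.
rewrite expectation_sum; first by rewrite big_map.
by move=> Xi /mapP [i _ ->].
Qed.

End indep.

Lemma indep_bc d (T : measurableType d) (R : realType) (P : probability T R) (n : nat)
  (a b c : 'I_n -> {RV P >-> R}) :
  mutually_independent (refs_family a b c) ->
  forall i A B, measurable A -> measurable B ->
  P (b i @^-1` A `&` c i @^-1` B) = (P (b i @^-1` A) * P (c i @^-1` B))%E.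
Proof.
move=> H i A B mA mB.
pose s1 : ('I_n + 'I_n + 'I_n)%type := inl (inr i).
pose s2 : ('I_n + 'I_n + 'I_n)%type := inr i.
pose J : {set ('I_n + 'I_n + 'I_n)%type} := [set s1; s2]%SET.
pose BB (s : ('I_n + 'I_n + 'I_n)%type) := if s == s1 then A else if s == s2 then B else setT.
have mBB : forall s, measurable (BB s).
  by move=> s; rewrite /BB; case: ifP => // _; case: ifP.
have := H J BB mBB.
have -> : \bigcap_(k in [set k | k \in J]) (refs_family a b c k @^-1` BB k) =
    b i @^-1` A `&` c i @^-1` B.
  apply/seteqP; split => w.
    move=> h; split.
      by have := h s1; rewrite /= /J in_set2 eqxx /BB eqxx /=; apply.
    have := h s2; rewrite /= /J in_set2 eqxx orbT /BB /=.
    by rewrite ?eqxx; apply.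
  move=> [hA hB] k; rewrite /= /J in_set2 => /orP [/eqP->|/eqP->] /=.
    by rewrite /BB eqxx.
  by rewrite /BB /= ?eqxx.
move=> ->.
rewrite /J big_setU1 ?big_set1 /=; last by rewrite !inE.
by rewrite /BB /= ?eqxx.
Qed.

Theorem theorem4p1 (d : measure_display) (T : measurableType d) (R : realType)
  (P : probability T R) (n : nat)
  (x y : 'I_n -> R) (f : ('I_n -> R) -> ('I_n -> R))
  (a b c : 'I_n -> {RV P >-> R}) :
  mutually_independent (refs_family a b c) ->
  (forall i, ('E_P[a i] = (x i)%:E /\ 'E_P[b i] = (x i)%:E /\
             'E_P[c i] = (x i)%:E)%E) ->
  (forall i, (a i : T -> R) \in Lfun P 2%:E /\ (b i : T -> R) \in Lfun P 2%:E /\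
             (c i : T -> R) \in Lfun P 2%:E) ->
  (forall i, ('V_P[a i] = 'V_P[b i] /\ 'V_P[b i] = 'V_P[c i])%E) ->
  ('E_P[uMSE_tilde (fun i => (a i : T -> R)) (fun i => (b i : T -> R))
                  (fun i => (c i : T -> R)) (f y)] = (MSE x (f y))%:E)%E.
Proof.
move=> Hind HE HL HV.
have Pfin : P setT \is a fin_num := fin_num_measure P _ measurableT.
pose Z (i : 'I_n) := (fun w => (a i w - f y i) ^+ 2 - (b i w - c i w) ^+ 2 / 2).
have Z1 : forall i, Z i \in Lfun P 1.
  move=> i; have [A2 [B2 C2]] := HL i.
  have -> : Z i = ((a i \- cst (f y i)) ^+ 2 \- (2^-1 : R) \o* (b i \- c i) ^+ 2)%R.
    by apply/funext => w /=; rewrite /Z /= mulrC.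
  apply: rpredB; last (apply: Lfun_scale => //; apply: Lfun2_mul_Lfun1; exact: LfunB2).
  by apply: Lfun2_mul_Lfun1; apply: LfunB2 => //; exact: Lfun_cst.
have EZ : forall i, ('E_P[Z i] = ((x i - f y i) ^+ 2)%:E)%E.
  move=> i; have [A2 [B2 C2]] := HL i; have [EA [EB EC]] := HE i.
  have [VAB VBC] := HV i.
  apply: term_expect => //.
  by apply: indep_mul => // A B mA mB; exact: (@indep_bc _ _ _ _ _ a b c Hind i A B mA mB).
transitivity ('E_P[((n%:R^-1 : R) \o* (fun w => \sum_(i < n) Z i w))%R])%E; first by congr (expectation _ _); apply/funext => w /=; rewrite mulrC.
rewrite expectationZl; last first.
  have -> : (fun w => \sum_(i < n) Z i w) = \sum_(i < n) Z i.
    by apply/funext => w; rewrite fct_sumE.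
  by rewrite rpred_sum.
rewrite expect_sum // (eq_bigr _ (fun i _ => EZ i)) sumEFin.
by rewrite /MSE EFinM.
Qed.
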